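(* There exist two disjoint visibly pushdown alphabets $\widetilde{\Sigma}_1,\widetilde{\Sigma}_2$ and well-matched visibly pushdown languages $P_1\subseteq\widetilde{\Sigma}_1^*$, $P_2\subseteq\widetilde{\Sigma}_2^*$ such that the set of minimal reductions of $P_1\parallel P_2$ under the commutativity relation $\mathbb{I}$ is not countable.
   Context: A visibly pushdown (VP) alphabet $\widetilde{\Sigma}$ is a finite alphabet partitioned into calls $\Sigma^{\mathsf{call}}$, returns $\Sigma^{\mathsf{ret}}$ and internals $\Sigma^{\mathsf{int}}$. In a word over $\widetilde{\Sigma}$, calls and returns are matched like opening and closing parentheses (internals are ignored); unmatched calls (returns) are pending; a word is well-matched if it has no pending calls or returns. A visibly pushdown language (VPL) is a language accepted by a visibly pushdown automaton (a pushdown automaton that pushes exactly one stack symbol on reading a call, pops exactly one on reading a return, and does not touch the stack on an internal). For $\widetilde{\Sigma}=\widetilde{\Sigma}_1\uplus\widetilde{\Sigma}_2$ and $L_i\subseteq\widetilde{\Sigma}_i^*$, the shuffle is $L_1\parallel L_2=\{w\in\widetilde{\Sigma}^*:\Pi_{\widetilde{\Sigma}_i}(w)\in L_i \text{ for } i=1,2\}$, where $\Pi_{\widetilde{\Sigma}_i}$ erases letters not in $\widetilde{\Sigma}_i$. Let $\mathbb{I}=\{(a,b): a\in\widetilde{\Sigma}_i,\ b\in\widetilde{\Sigma}_j,\ i\neq j\}$ and let $\equiv_{\mathbb{I}}$ be the least reflexive transitive relation on $\widetilde{\Sigma}^*$ with $uabv\equiv_{\mathbb{I}}ubav$ whenever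 $(a,b)\in\mathbb{I}$. For a language $L$, a subset $\widehat{L}\subseteq L$ is a reduction if every $\rho\in L$ has some $\sigma\in\widehat{L}$ with $\sigma\equiv_{\mathbb{I}}\rho$; it is minimal if there is exactly one such $\sigma$ for every $\rho$. *)

(* Defs.v *)
From mathcomp Require Import all_boot.
From Stdlib Require Import Relations.

Set Implicit Arguments. Unset Strict Implicit. Unset Printing Implicit Defensive.

Inductive vpkind := Call | Ret | Int.

(* A VP alphabet is a finType S together with kind : S -> vpkind,
   partitioning S into calls, returns and internals. *)

Definition lang (S : Type) := seq S -> Prop.

(* Well-matched words: every return matched by an earlier call and no
   pending calls. wm_aux d w : current depth of pending calls is d. *)
Fixpoint wm_aux (S : Type) (k : S -> vpkind) (d : nat) (w : seq S) : bool :=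
  match w with
  | [::] => d == 0
  | a :: w' =>
      match k a with
      | Call => wm_aux k d.+1 w'
      | Ret => if d is d'.+1 then wm_aux k d' w' else false
      | Int => wm_aux k d w'
      end
  end.

Definition well_matched (S : Type) (k : S -> vpkind) (w : seq S) : bool :=
  wm_aux k 0 w.

Definition well_matched_lang (S : Type) (k : S -> vpkind) (L : lang S) : Prop :=
  forall w, L w -> well_matched k w.

(* Visibly pushdown automata (Alur-Madhusudan): a finite set of states,
   a finite stack alphabet, initial and final states; a call pushes one
   stack symbol, a return pops one (or reads the empty-stack bottom,
   encoded by None, leaving the stack empty), an internal leaves the
   stack untouched. *)
Record VPA (S : Type) := {
  vstate : finType;
  vstack : finType;
  vinit : pred vstate;
  vfinal : pred vstate;
  dcall : vstate -> S -> vstate -> vstack -> bool;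
  dret  : vstate -> S -> option vstack -> vstate -> bool;
  dint  : vstate -> S -> vstate -> bool
}.
Arguments vinit {S} v _.
Arguments vfinal {S} v _.
Arguments dcall {S} v _ _ _ _.
Arguments dret {S} v _ _ _ _.
Arguments dint {S} v _ _ _.

Inductive vrun {S : Type} (k : S -> vpkind) (A : VPA S) :
  vstate A -> seq (vstack A) -> seq S -> vstate A -> seq (vstack A) -> Prop :=
| vrun_nil q st : @vrun S k A q st [::] q st
| vrun_call q st a q' g w q'' st'' :
    k a = Call -> dcall A q a q' g -> @vrun S k A q' (g :: st) w q'' st'' ->
    @vrun S k A q st (a :: w) q'' st''
| vrun_ret q g st a q' w q'' st'' :
    k a = Ret -> dret A q a (Some g) q' -> @vrun S k A q' st w q'' st'' ->
    @vrun S k A q (g :: st) (a :: w) q'' st''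
| vrun_ret_bot q a q' w q'' st'' :
    k a = Ret -> dret A q a None q' -> @vrun S k A q' [::] w q'' st'' ->
    @vrun S k A q [::] (a :: w) q'' st''
| vrun_int q st a q' w q'' st'' :
    k a = Int -> dint A q a q' -> @vrun S k A q' st w q'' st'' ->
    @vrun S k A q st (a :: w) q'' st''.

Definition vaccepts (S : Type) (k : S -> vpkind) (A : VPA S) (w : seq S) : Prop :=
  exists q0 qf st, vinit A q0 /\ vfinal A qf /\ @vrun S k A q0 [::] w qf st.

Definition is_VPL (S : Type) (k : S -> vpkind) (L : lang S) : Prop :=
  exists A : VPA S, forall w, L w <-> vaccepts k A w.

Definition sum_kind (S1 S2 : Type) (k1 : S1 -> vpkind) (k2 : S2 -> vpkind)
  (x : S1 + S2) : vpkind :=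
  match x with inl a => k1 a | inr b => k2 b end.

Definition proj1w (S1 S2 : Type) (w : seq (S1 + S2)) : seq S1 :=
  pmap (fun x => match x with inl a => Some a | inr _ => None end) w.
Definition proj2w (S1 S2 : Type) (w : seq (S1 + S2)) : seq S2 :=
  pmap (fun x => match x with inl _ => None | inr b => Some b end) w.

Definition shuffle (S1 S2 : Type) (L1 : lang S1) (L2 : lang S2) : lang (S1 + S2) :=
  fun w => L1 (proj1w w) /\ L2 (proj2w w).

Definition indep (S1 S2 : Type) (x y : S1 + S2) : Prop :=
  match x, y with
  | inl _, inr _ => True
  | inr _, inl _ => True
  | _, _ => False
  end.

Definition swap_step (S1 S2 : Type) (w1 w2 : seq (S1 + S2)) : Prop :=
  exists u v a b, indep a b /\ w1 = u ++ a :: b :: v /\ w2 = u ++ b :: a :: v.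

Definition trace_equiv (S1 S2 : Type) : relation (seq (S1 + S2)) :=
  clos_refl_trans _ (@swap_step S1 S2).

Definition is_reduction (S1 S2 : Type) (L Lh : lang (S1 + S2)) : Prop :=
  (forall w, Lh w -> L w) /\
  (forall rho, L rho -> exists sigma, Lh sigma /\ trace_equiv sigma rho).

Definition is_minimal_reduction (S1 S2 : Type) (L Lh : lang (S1 + S2)) : Prop :=
  (forall w, Lh w -> L w) /\
  (forall rho, L rho -> exists! sigma, Lh sigma /\ trace_equiv sigma rho).

Definition countable_coll (T : Type) (C : T -> Prop) : Prop :=
  exists f : T -> nat, forall x y, C x -> C y -> f x = f y -> x = y.

(* Main.v *)
Require Import Defs.
From mathcomp Require Import all_boot.
From Stdlib Require Import Relations Classical.

Set Implicit Arguments. Unset Strict Implicit. Unset Printing Implicit Defensive.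

Definition la : unit + unit := inl tt.
Definition lb : unit + unit := inr tt.
Definition Xw n : seq (unit + unit) := lb :: nseq n la.
Definition Yw n : seq (unit + unit) := nseq n la ++ [:: lb].

Lemma proj1_nseq n : proj1w (nseq n la) = nseq n tt.
Proof. by elim: n => //= n ->. Qed.
Lemma proj2_nseq n : proj2w (nseq n la) = [::].
Proof. by elim: n. Qed.
Lemma proj1_cat (u v : seq (unit + unit)) : proj1w (u ++ v) = proj1w u ++ proj1w v.
Proof. by rewrite /proj1w pmap_cat. Qed.
Lemma proj2_cat (u v : seq (unit + unit)) : proj2w (u ++ v) = proj2w u ++ proj2w v.
Proof. by rewrite /proj2w pmap_cat. Qed.

Lemma te_proj (x y : seq (unit + unit)) : trace_equiv x y ->
  proj1w x = proj1w y /\ proj2w x = proj2w y.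
Proof.
elim=> {x y} [x y [u [v [a [b [Hi [-> ->]]]]]]| x | x y z _ [-> ->] _ [-> ->]] //.
rewrite !proj1_cat !proj2_cat.
by case: a b Hi => [[]|[]] [[]|[]].
Qed.

Lemma te_cons (u : seq (unit+unit)) x y z :
  trace_equiv (u ++ [:: x, y & z]) (u ++ [:: y, x & z]) -> True.
Proof. by []. Qed.

Lemma sw (u w : seq (unit+unit)) x y : indep x y ->
  trace_equiv (u ++ [:: x, y & w]) (u ++ [:: y, x & w]).
Proof. move=> H; apply: rt_step; by exists u, w, x, y. Qed.

Lemma R1 i (u w : seq (unit+unit)) :
  trace_equiv (u ++ lb :: nseq i la ++ w) (u ++ nseq i la ++ lb :: w).
Proof.
elim: i u => [|i IH] u /=; first exact: rt_refl.
apply: rt_trans; first by apply: (sw u (nseq i la ++ w) (x:=lb) (y:=la)).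
have := IH (rcons u la); rewrite -cats1 -!catA /=; exact.
Qed.

Lemma R2 j (u w : seq (unit+unit)) :
  trace_equiv (u ++ nseq j la ++ lb :: w) (u ++ lb :: nseq j la ++ w).
Proof.
elim: j u => [|j IH] u /=; first exact: rt_refl.
apply: rt_trans; last by apply: (sw u (nseq j la ++ w) (x:=la) (y:=lb)).
have := IH (rcons u la); rewrite -cats1 -!catA /=; exact.
Qed.

Lemma proj2_nil (w : seq (unit+unit)) : proj2w w = [::] -> w = nseq (size w) la.
Proof.
elim: w => //= x w IH; case: x => [[]|[]] //= H.
by rewrite /la -IH.
Qed.

Lemma decomp (w : seq (unit+unit)) : proj2w w = [:: tt] ->
  exists i j, w = nseq i la ++ lb :: nseq j la.
Proof.
elim: w => //= x w IH; case: x => [[]|[]] /=.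
- move=> /IH [i [j ->]]; by exists i.+1, j.
- case=> /proj2_nil ->; by exists 0, (size w).
Qed.

Lemma size_dec i j : size (proj1w (nseq i la ++ lb :: nseq j la)) = i + j.
Proof. by rewrite proj1_cat /= !proj1_nseq size_cat !size_nseq. Qed.

Lemma projX n : size (proj1w (Xw n)) = n /\ proj2w (Xw n) = [:: tt].
Proof. by rewrite /Xw /= proj1_nseq proj2_nseq size_nseq. Qed.
Lemma projY n : size (proj1w (Yw n)) = n /\ proj2w (Yw n) = [:: tt].
Proof. by rewrite /Yw proj1_cat proj2_cat /= proj1_nseq proj2_nseq cats0 size_nseq. Qed.

Definition P1 : lang unit := fun _ => True.
Definition P2 : lang unit := fun s => s = [:: tt].
Definition kI (x : unit) := Int.

Definition Lh (P : nat -> Prop) : lang (unit + unit) := fun w =>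
  proj2w w = [:: tt] /\
  (P (size (proj1w w)) -> w = Xw (size (proj1w w))) /\
  (~ P (size (proj1w w)) -> w = Yw (size (proj1w w))).

Lemma Lh_min P : is_minimal_reduction (@shuffle unit unit P1 P2) (Lh P).
Proof.
split; first by move=> w [H _]; split.
move=> rho [_ Hr]; rewrite /P2 in Hr.
have [i [j Hrho]] := decomp Hr.
have Hn : size (proj1w rho) = i + j by rewrite Hrho size_dec.
have uniq : forall s, Lh P s /\ trace_equiv s rho ->
   (P (i + j) -> s = Xw (i + j)) /\ (~ P (i + j) -> s = Yw (i + j)).
  move=> s [[_ [HX HY]] /te_proj [E _]]; rewrite E Hn in HX HY; by [].
case: (classic (P (i + j))) => HP.
- exists (Xw (i + j)); split.
  + have [S2 P2'] := projX (i + j); split; first by rewrite /Lh S2.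
    rewrite Hrho /Xw nseqD /=; exact: (R1 i [::] (nseq j la)).
  + by move=> s /uniq [H _]; rewrite H.
- exists (Yw (i + j)); split.
  + have [S2 P2'] := projY (i + j); split; first by rewrite /Lh S2.
    rewrite Hrho /Yw nseqD -catA; have := R2 j (nseq i la) [::]; rewrite cats0; exact.
  + by move=> s /uniq [_ H]; rewrite H.
Qed.

Lemma Lh_X P n : 0 < n -> (Lh P (Xw n) <-> P n).
Proof.
move=> n0; have [S2 P2'] := projX n; rewrite /Lh S2; split.
- move=> [_ [_ HY]]; apply: NNPP => /HY; move: n0; clear; case: n => // n _; rewrite /Xw /Yw /=; by case.
- move=> HP; split => //; split => // /(_ HP) [].
Qed.

Lemma VPL1 : is_VPL kI P1.
Proof.
exists (@Build_VPA unit (unit : finType) (unit : finType) predT predT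
   (fun _ _ _ _ => false) (fun _ _ _ _ => false) (fun _ _ _ => true)).
move=> w; split => // _.
exists tt, tt, [::]; split => //; split => //.
elim: w => [|a w IH]; first exact: vrun_nil.
apply: vrun_int; [done | exact: (erefl true) | exact: IH].
Qed.

Lemma VPL2 : is_VPL kI P2.
Proof.
set A := (@Build_VPA unit (bool : finType) (unit : finType) (fun q => ~~ q) (fun q => q)
   (fun _ _ _ _ => false) (fun _ _ _ _ => false) (fun q _ q' => ~~ q && q')).
exists A => w; split.
- move=> ->; exists false, true, [::]; split => //; split => //.
  apply: (@vrun_int _ _ A false [::] tt true); [done | done | exact: vrun_nil].
- move=> [q0 [qf [st [H0 [Hf Hr]]]]].
  have : forall q st w q' st', @vrun unit kI A q st w q' st' ->
     (q = false -> q' = true -> w = [:: tt]) /\ (q = true -> w = [::]).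
    move=> q1 st1 w1 q2 st2; elim => //=.
    + by move=> q st2'; split => // ->.
    + move=> q st2' a q' w2 q'' st'' _ /andP [/negbTE -> ->] _ [_ IH].
      split => // _ _; case: a; by rewrite IH.
  move/(_ _ _ _ _ _ Hr) => [H _].
  by apply: H; [apply/negbTE: H0 | apply: Hf].
Qed.

Lemma wmI : well_matched_lang kI (fun _ => True).
Proof. move=> w _; rewrite /well_matched; by elim: w. Qed.

Theorem proposition3p2 :
  exists (S1 S2 : finType) (k1 : S1 -> vpkind) (k2 : S2 -> vpkind)
         (P1 : lang S1) (P2 : lang S2),
    is_VPL k1 P1 /\ well_matched_lang k1 P1 /\
    is_VPL k2 P2 /\ well_matched_lang k2 P2 /\
    ~ countable_coll (is_minimal_reduction (shuffle P1 P2)).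
Proof.
exists (unit : finType), (unit : finType), kI, kI, P1, P2.
split; first exact: VPL1.
split; first by move=> w _; apply: wmI.
split; first exact: VPL2.
split; first by move=> w _; apply: wmI.
move=> [f Hf].
set D := fun k => exists P, f (Lh P) = k.-1 /\ ~ P k.
set m := f (Lh D).
have key : forall P, f (Lh P) = m -> (P m.+1 <-> D m.+1).
  move=> P E; have := Hf _ _ (Lh_min P) (Lh_min D) E => EL.
  rewrite -(Lh_X P (ltn0Sn m)) -(Lh_X D (ltn0Sn m)) EL; by [].
case: (classic (D m.+1)) => HD.
- have [P [E NP]] := HD; apply: NP; by apply/(key P E).
- apply: (HD); exists D; split; [reflexivity | exact: HD].
Qed.
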